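(* Let $k\ge2$, $d=4\cdot3^{k-1}$, and let $p:\Psi^k\to\{1,\dots,d\}$ be any bijection. For each group-theoretical relation $(\gamma,\psi)$ of level $k$ define $h_{\gamma,\psi}:\Delta^{d-1}\to\mathbb{R}$ by $$h_{\gamma,\psi}(x)=\sigma\Bigl(\sum_{\psi'\in S(\gamma,\psi)}x_{p(\psi')}\Bigr)\,\sigma\bigl(x_{p(\psi)}\bigr),$$ and let $G^k(x)=\max h_{\gamma,\psi}(x)$, the maximum over all group-theoretical relations $(\gamma,\psi)$ of level $k$. Then $\inf_{x\in\Delta^{d-1}}G^k(x)=12\cdot3^{k-1}-3$.
   Context: $\Gamma$ is the free group on $\xi,\eta$; $|w|$ denotes reduced word length; $\Psi^k$ is the set of reduced words of length exactly $k$ (so $|\Psi^k|=4\cdot3^{k-1}$). $\Delta^{d-1}=\{x\in\mathbb{R}^d: x_i>0,\ \sum_i x_i=1\}$ and $\sigma(t)=(1-t)/t$ for $t\in(0,1)$. A group-theoretical relation of level $k$ is a pair $(\gamma,\psi)$ with $\gamma\in\Gamma\setminus\{1\}$, $|\gamma|\le k$, $\psi\in\Psi^k$, and $|\gamma\psi|\le k$. For such a pair, $S(\gamma,\psi)\subset\Psi^k$ is: if $\gamma\psi=1$, the set of words in $\Psi^k$ whose first letter equals the first letter of the reduced word $\gamma$; if $\gamma\psi\ne1$, the set of words in $\Psi^k$ that do not have the reduced word $\gamma\psi$ as an initial subword. (In all cases $S(\gamma,\psi)$ is a nonempty proper subset of $\Psi^k$, so $h_{\gamma,\psi}$ is well defined.)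 *)

(* Defs.v *)
From Stdlib Require Import Reals.
From mathcomp Require Import all_boot.
Set Implicit Arguments. Unset Strict Implicit. Unset Printing Implicit Defensive.

(* Letters of the free group on xi, eta: (g, s) with g = false for xi,
   g = true for eta, and s = false for exponent +1, s = true for exponent -1. *)
Definition letter := (bool * bool)%type.
Definition xi : letter := (false, false).
Definition eta : letter := (true, false).
Definition inv_letter (a : letter) : letter := (a.1, ~~ a.2).

Definition word := seq letter.

Definition reduced (w : word) : bool :=
  if w is a :: t then path (fun a b => b != inv_letter a) a t else true.

Definition red (w : word) : word :=
  foldr (fun a s => if s is b :: t then (if b == inv_letter a then t else a :: s)
                    else [:: a]) [::] w.

(* Product in Gamma of (reduced words representing) group elements. *)
Definition gmul (u v : word) : word := red (u ++ v).

Fixpoint all_words (n : nat) : seq word :=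
  if n is n'.+1 then [seq a :: w | a <- [:: (false, false); (false, true); (true, false); (true, true)], w <- all_words n']
  else [:: [::]].

Definition Psi (k : nat) : seq word := [seq w <- all_words k | reduced w].

Definition ball (k : nat) : seq word :=
  [seq w <- flatten [seq all_words n | n <- iota 0 k.+1] | reduced w].

Definition relations (k : nat) : seq (word * word) :=
  [seq gp <- [seq (g, s) | g <- ball k, s <- Psi k]
     | (gp.1 != [::]) && (size (gmul gp.1 gp.2) <= k)%N].

Definition Sset (k : nat) (g s : word) : seq word :=
  if gmul g s == [::] then [seq w <- Psi k | take 1 w == take 1 g]
  else [seq w <- Psi k | ~~ prefix (gmul g s) w].

Open Scope R_scope.

Definition sigma (t : R) : R := (1 - t) / t.

(* The open simplex Delta^{d-1}, coordinates indexed by 'I_d (i.e. 0..d-1). *)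
Definition in_simplex (d : nat) (x : 'I_d -> R) : Prop :=
  (forall i, 0 < x i) /\ \big[Rplus/0]_(i < d) x i = 1.

Definition hfun (k d : nat) (p : word -> 'I_d) (g s : word) (x : 'I_d -> R) : R :=
  sigma (\big[Rplus/0]_(w <- Sset k g s) x (p w)) * sigma (x (p s)).

(* Maximum of a finite nonempty list of reals (0 for the empty list). *)
Definition list_max (l : seq R) : R :=
  if l is a :: t then foldr Rmax a t else 0.

Definition Gk (k d : nat) (p : word -> 'I_d) (x : 'I_d -> R) : R :=
  list_max [seq hfun k p gp.1 gp.2 x | gp <- relations k].

Definition is_inf (E : R -> Prop) (m : R) : Prop :=
  (forall y, E y -> m <= y) /\
  (forall m', (forall y, E y -> m' <= y) -> m' <= m).

(* Main.v *)
Require Import Defs.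
From Stdlib Require Import Reals.
From mathcomp Require Import all_boot.
From HB Require Import structures.
From Stdlib Require Import Lra Lia Psatz.
From mathcomp Require Import zify.

HB.instance Definition _ := Monoid.isComLaw.Build R 0 Rplus (fun a b c => esym (Rplus_assoc a b c)) Rplus_comm Rplus_0_l.

Section Comb.
Local Open Scope nat_scope.

Lemma all_words_S n : all_words n.+1 =
  [seq (false,false) :: w | w <- all_words n] ++ [seq (false,true) :: w | w <- all_words n] ++
  [seq (true,false) :: w | w <- all_words n] ++ [seq (true,true) :: w | w <- all_words n].
Proof. by rewrite /= cats0. Qed.

Lemma count_S (Q : pred word) n : count Q (all_words n.+1) =
  count (fun w => Q ((false,false)::w)) (all_words n) + count (fun w => Q ((false,true)::w)) (all_words n)
 + count (fun w => Q ((true,false)::w)) (all_words n) + count (fun w => Q ((true,true)::w)) (all_words n).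
Proof. by rewrite all_words_S !count_cat !count_map addnA addnA. Qed.

Lemma count_false (T : Type) (l : seq T) : count (fun _ => false) l = 0.
Proof. by elim: l. Qed.

Definition D n b := count (fun w => reduced (b :: w)) (all_words n).

Lemma D_val n b : D n b = 3 ^ n.
Proof.
elim: n b => [|n IH] b; first by rewrite /D /=.
rewrite /D count_S.
case: b => [[] []] /=; rewrite ?count_false. all: rewrite -?/(D n _) ?IH expnS. all: try lia.
Qed.
Definition E n a l := count (fun w => reduced (a :: w) && (last a w == l)) (all_words n).
Definition T n l := E n (false,false) l + E n (false,true) l + E n (true,false) l + E n (true,true) l.

Lemma T_val n l : T n l = 3 ^ n.
Proof.
elim: n => [|n IH]; first by case: l => [[] []].
rewrite expnS -IH /T /E !count_S /=.
rewrite ?count_false -!/(E n _ _). lia.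
Qed.
Definition inv_letterK a : inv_letter (inv_letter a) = a.
Proof. by case: a => [? []]. Qed.

Lemma take1_winv a w : take 1 (rev (map inv_letter (a::w))) = [:: inv_letter (last a w)].
Proof. rewrite (lastI a w) map_rcons rev_rcons /= take0 //.
Qed.
Lemma take1_cons (a : letter) w : take 1 (a::w) = [::a].
Proof. by rewrite /= take0. Qed.

Lemma count_Psi (P : pred word) k : count P (Psi k) = count (fun w => reduced w && P w) (all_words k).
Proof. rewrite /Psi count_filter; apply: eq_count => w /=; by rewrite andbC. Qed.

Lemma count_andF (T : Type) (P : pred T) l : count (fun w => P w && false) l = 0.
Proof. by elim: l => //= a l ->; rewrite andbF. Qed.
Lemma count_andN (T : Type) (P : pred T) l : count (fun w => P w && ([::] == [::] :> seq letter)) l = count P l.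
Proof. by elim: l => //= a l ->; rewrite andbT. Qed.

Lemma head_count k b : count (fun w => take 1 w == [::b]) (Psi k.+1) = 3^k.
Proof.
rewrite count_Psi count_S.
under eq_count => w do rewrite take1_cons.
under [X in _ + X + _ + _]eq_count => w do rewrite take1_cons.
under [X in _ + X + _]eq_count => w do rewrite take1_cons.
under [X in _ + X]eq_count => w do rewrite take1_cons.
case: b => [[] []] /=; rewrite ?count_false; rewrite !eqseq_cons /= ?andbF ?andbT ?count_false -?/(D k _) ?count_andF ?count_andN -?/(D k _) ?D_val; lia.
Qed.

Lemma tail_count k b : count (fun w => [::b] == take 1 (rev (map inv_letter w))) (Psi k.+1) = 3^k.
Proof.
rewrite count_Psi count_S.
under eq_count => w do rewrite take1_winv.
under [X in _ + X + _ + _]eq_count => w do rewrite take1_winv.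
under [X in _ + X + _]eq_count => w do rewrite take1_winv.
under [X in _ + X]eq_count => w do rewrite take1_winv.
have H : forall l, ([:: b] == [:: inv_letter l]) = (l == inv_letter b).
  move=> l; apply/eqP/eqP => [[->]|->]; by rewrite inv_letterK.
have H2 a : count (fun w => reduced (a :: w) && ([:: b] == [:: inv_letter (last a w)])) (all_words k) = E k a (inv_letter b).
  by apply: eq_count => w; rewrite H.
by rewrite !H2 -(T_val k (inv_letter b)).
Qed.

Lemma mem_map_cons (a b : letter) w l : (a :: w \in [seq b :: u | u <- l]) = (a == b) && (w \in l).
Proof.
apply/mapP/andP => [[u ul [-> ->]]|[/eqP -> wl]]; first by rewrite eqxx.
by exists w.
Qed.

Lemma mem_all_words n w : (w \in all_words n) = (size w == n).
Proof.
elim: n w => [|n IH] [|a w]; rewrite ?all_words_S //=.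
  have H b l : ([::] \in [seq b :: u | u <- l]) = false by apply/mapP => -[].
  by rewrite !mem_cat !H.
rewrite !mem_cat !mem_map_cons IH eqSS.
by case: a => [[] []]; rewrite /= ?orbF.
Qed.

Lemma uniq_all_words n : uniq (all_words n).
Proof.
elim: n => [//|n IH].
apply: allpairs_uniq => //.
by move=> [a u] [b v] _ _ /= [-> ->].
Qed.

Lemma uniq_Psi k : uniq (Psi k).
Proof. exact/filter_uniq/uniq_all_words. Qed.

Lemma mem_Psi k w : (w \in Psi k) = reduced w && (size w == k).
Proof. by rewrite mem_filter mem_all_words. Qed.

Lemma size_Psi k : size (Psi k.+1) = 4 * 3 ^ k.
Proof.
rewrite -count_predT count_Psi.
have -> : count (fun w => reduced w && predT w) (all_words k.+1) = count reduced (all_words k.+1)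
  by apply: eq_count => w; rewrite andbT.
rewrite count_S.
rewrite -!/(D k _) !D_val. lia.
Qed.

Definition step (a : letter) (s : word) : word :=
  if s is b :: t then (if b == inv_letter a then t else a :: s) else [:: a].

Lemma red_cat u v : red (u ++ v) = foldr step (red v) u.
Proof. by rewrite /red foldr_cat. Qed.

Lemma red_reduced w : reduced w -> red w = w.
Proof.
elim: w => [//|a t IH] Hr.
have Ht : reduced t by move: Hr; rewrite /reduced; case: t {IH} => //= b t /andP [].
rewrite -[a :: t]cat1s red_cat IH //=.
move: Hr; case: t {IH Ht} => //= b t /andP [/negbTE -> _] //.
Qed.

Lemma foldr_winv t : foldr step t (rev (map inv_letter t)) = [::].
Proof.
elim: t => [//|b t IH].
by rewrite /= rev_cons -cats1 foldr_cat /= inv_letterK eqxx.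
Qed.

Definition winv (w : word) : word := rev (map inv_letter w).

Lemma gmul_winv w : reduced w -> gmul (winv w) w = [::].
Proof. by move=> Hr; rewrite /gmul red_cat red_reduced // foldr_winv. Qed.

Lemma reduced_sorted w : reduced w = sorted (fun a b => b != inv_letter a) w.
Proof. by case: w. Qed.

Lemma reduced_winv w : reduced w -> reduced (winv w).
Proof.
rewrite !reduced_sorted /winv rev_sorted sorted_map.
have E : relpre inv_letter (fun z : letter => (fun a b => b != inv_letter a)^~ z) =2 (fun a b => b != inv_letter a).
  by move=> a b /=; rewrite inv_letterK eq_sym.
by case: w => //= a w; rewrite (eq_path E).
Qed.

Lemma size_winv w : size (winv w) = size w.
Proof. by rewrite size_rev size_map. Qed.

Lemma rel_winv k w : (0 < k) -> w \in Psi k -> (winv w, w) \in relations k.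
Proof.
move=> k0 wP; have := wP; rewrite mem_Psi => /andP [Hr /eqP Hs].
rewrite mem_filter; apply/andP; split.
  rewrite [_.1]/= [_.2]/= gmul_winv // andbT.
  by rewrite -size_eq0 size_winv Hs -lt0n.
apply/allpairsP; exists (winv w, w); split => //.
rewrite mem_filter reduced_winv //.
apply/flattenP; exists (all_words k).
  by apply/mapP; exists k => //; rewrite mem_iota add0n ltnSn.
by rewrite mem_all_words size_winv Hs.
Qed.

Lemma Sset_winv k w : w \in Psi k -> Sset k (winv w) w = [seq u <- Psi k | take 1 u == take 1 (winv w)].
Proof. by rewrite mem_Psi => /andP [Hr _]; rewrite /Sset gmul_winv. Qed.

Lemma Sset_size k g s : (g, s) \in relations k.+1 -> 3 ^ k <= size (Sset k.+1 g s).
Proof.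
rewrite mem_filter /= => /andP [/andP [gn _] _].
rewrite /Sset; case: eqP => [_|].
  case: g gn => // a g _; rewrite size_filter take1_cons head_count //.
case: (gmul g s) => // c r _.
rewrite size_filter -(head_count k (inv_letter c)).
apply: sub_count => -[//|d w]; rewrite take1_cons => /eqP [->] /=.
apply/negP => /andP [/eqP E _]; move: E; by case: c => x [] /= [] /=.
Qed.

End Comb.

Section Real.
Local Open Scope R_scope.

Lemma key N a y : 1 <= N -> 0 < a -> 0 < y -> Defs.sigma a * Defs.sigma y < 12*N - 3 ->
  1/(4*N) - (12*N-3)/(9*N*N) * (a - 1/4) < y.
Proof.
move=> HN Ha Hy H.
have H1 : (1-a)*(1-y) < (12*N-3)*(a*y).
  replace ((1-a)*(1-y)) with ((Defs.sigma a * Defs.sigma y)*(a*y)) by (unfold Defs.sigma; field; lra).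
  apply Rmult_lt_compat_r; nra.
have H2 : 1 - a < y*(1+(12*N-4)*a) by nra.
set b := 1+(12*N-4)*a.
have Hb : 0 < b by rewrite /b; nra.
have E : 1/(4*N) - (12*N-3)/(9*N*N) * (a - 1/4) = (9*N - (12*N-3)*(4*a-1)) / (36*N*N) by field; lra.
rewrite E.
have H3 : 36*N*N*(1-a) = (9*N - (12*N-3)*(4*a-1))*b + (12*N-3)*(3*N-1)*((4*a-1)*(4*a-1)) by rewrite /b; ring.
have H4 : 0 <= (12*N-3)*(3*N-1)*((4*a-1)*(4*a-1)).
  apply Rmult_le_pos; [nra| apply Rle_0_sqr].
have H2' : 36*N*N*(1-a) < 36*N*N*(y*b).
  apply Rmult_lt_compat_l. nra. exact H2.
have H5 : (9*N - (12*N-3)*(4*a-1)) * b < (36*N*N*y) * b.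
  have -> : 36*N*N*y*b = 36*N*N*(y*b) by ring.
  lra.
have H6 : 9*N - (12*N-3)*(4*a-1) < 36*N*N*y by apply (Rmult_lt_reg_r b).
apply (Rmult_lt_reg_r (36*N*N)); [nra|].
replace ((9*N - (12*N-3)*(4*a-1)) / (36*N*N) * (36*N*N)) with (9*N - (12*N-3)*(4*a-1)) by (field; lra). nra.
Qed.



Lemma iter_Rplus n c : iter n (Rplus c) 0 = INR n * c.
Proof. elim: n => [|n IH]; first by rewrite /=; ring. rewrite iterS IH S_INR; ring. Qed.

Lemma sum_const (T : Type) (l : seq T) (P : pred T) c :
  \big[Rplus/0]_(i <- l | P i) c = INR (count P l) * c.
Proof. by rewrite big_const_seq iter_Rplus. Qed.

Lemma sum_affine (T : Type) (l : seq T) (F : T -> R) al be :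
  \big[Rplus/0]_(i <- l) (al + be * F i) = INR (size l) * al + be * \big[Rplus/0]_(i <- l) F i.
Proof.
elim: l => [|a l IH]; first by rewrite !big_nil /=; ring.
have -> : size (a :: l) = (size l).+1 by []. rewrite !big_cons IH S_INR; ring.
Qed.

Lemma sum_scale (T : Type) (l : seq T) (F : T -> R) c :
  \big[Rplus/0]_(i <- l) (c * F i) = c * \big[Rplus/0]_(i <- l) F i.
Proof.
elim: l => [|a l IH]; first by rewrite !big_nil /=; ring.
rewrite !big_cons IH; ring.
Qed.

Lemma sum_lt (T : eqType) (l : seq T) (F G : T -> R) : l != [::] ->
  (forall i, i \in l -> G i < F i) ->
  \big[Rplus/0]_(i <- l) G i < \big[Rplus/0]_(i <- l) F i.
Proof.
elim: l => [//|a l IH] _ H.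
rewrite !big_cons.
have Ha : G a < F a by apply: H; rewrite mem_head.
case: l IH H => [|b l] IH H; first by rewrite !big_nil; lra.
have := IH isT (fun i hi => H i (@mem_behead _ (a :: b :: l) _ hi)); lra.
Qed.

Lemma sum_pos (T : eqType) (l : seq T) (F : T -> R) : l != [::] ->
  (forall i, 0 < F i) -> 0 < \big[Rplus/0]_(i <- l) F i.
Proof.
elim: l => [//|a l IH] _ H.
rewrite big_cons.
have Ha := H a.
case: l IH => [|b l] IH; first by rewrite big_nil; lra.
have := IH isT H; lra.
Qed.

Lemma foldr_Rmax_ge a t y : (y = a \/ List.In y t) -> y <= foldr Rmax a t.
Proof.
elim: t => [|b t IH] /= H.
- case: H => [->|[]]; lra.
- case: H => [E|[<-|H]].
  + apply: Rle_trans _ (Rmax_r _ _); apply: IH; left; exact E.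
  + apply Rmax_l.
  + apply: Rle_trans _ (Rmax_r _ _); apply: IH; right; exact H.
Qed.

Lemma list_max_ge (T : eqType) (f : T -> R) l t : t \in l -> f t <= list_max (map f l).
Proof.
case: l => [//|a l] /=; rewrite in_cons => /orP [/eqP ->|H].
  by apply: foldr_Rmax_ge; left.
apply: foldr_Rmax_ge; right.
elim: l H => [//|b l IH]; rewrite in_cons => /orP [/eqP ->|H] /=; [left|right]; auto.
Qed.

Lemma list_max_le (T : eqType) (f : T -> R) l c : 0 <= c -> (forall t, t \in l -> f t <= c) ->
  list_max (map f l) <= c.
Proof.
case: l => [//|a l] /= Hc H.
have : f a <= c by apply: H; rewrite mem_head.
elim: l H => [|b l IH] H //= Ha.
apply: Rmax_lub; first by apply: H; rewrite in_cons mem_head orbT.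
apply: IH => // t Ht; apply: H; rewrite !in_cons in Ht *.
by case/orP: Ht => ->; rewrite ?orbT.
Qed.

Lemma upper N s : 1 <= N -> N <= s ->
  Defs.sigma (s * (1 / (4 * N))) * Defs.sigma (1 / (4*N)) <= 12 * N - 3.
Proof.
move=> HN Hs; rewrite /Defs.sigma.
have -> : (1 - 1 / (4 * N)) / (1 / (4 * N)) = 4*N - 1 by field; lra.
have -> : (1 - s * (1 / (4 * N))) / (s * (1 / (4 * N))) = (4*N - s)/s by field; lra.
have H : (4*N - s)/s <= 3.
  apply (Rmult_le_reg_r s); first lra.
  have -> : (4*N - s)/s * s = 4*N - s by field; lra.
  lra.
have : (4*N - s)/s * (4*N-1) <= 3 * (4*N-1) by apply Rmult_le_compat_r; lra.
lra.
Qed.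

End Real.

Theorem mainTheorem12 (k : nat) (hk : (2 <= k)%N)
  (p : word -> 'I_(4 * 3 ^ k.-1))
  (p_inj : {in Psi k &, injective p})
  (p_surj : forall i : 'I_(4 * 3 ^ k.-1), exists2 w, w \in Psi k & p w = i) :
  is_inf (fun y => exists x : 'I_(4 * 3 ^ k.-1) -> R,
                     in_simplex x /\ y = Gk k p x)
         (Rminus (INR (12 * 3 ^ k.-1)) (INR 3)).
Proof.
case: k hk p p_inj p_surj => [//|k'] hk p p_inj p_surj.
rewrite [k'.+1.-1]/=.
set n := (3 ^ k')%N.
have Nge : 1 <= INR n.
  have : (1 <= n)%N by rewrite /n expn_gt0.
  by move/leP/le_INR.
have Ec : INR (12 * n) - INR 3 = 12 * INR n - 3.
  by rewrite mult_INR; simpl INR at 1 3; ring.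
have Ed : INR (4 * n) = 4 * INR n.
  by rewrite mult_INR; simpl INR at 1; ring.
rewrite Ec.
set Ps := Psi k'.+1.
have Hbij : forall x : 'I_(4 * n) -> R,
    \big[Rplus/0]_(w <- Ps) x (p w) = \big[Rplus/0]_(i < 4 * n) x i.
  move=> x; rewrite -(big_map p xpredT (fun i => x i)).
  apply: perm_big; apply: uniq_perm.
  - by rewrite (map_inj_in_uniq p_inj) uniq_Psi.
  - exact: index_enum_uniq.
  - move=> i; rewrite mem_index_enum; have [w wP <-] := p_surj i; exact: map_f.
split.
- move=> y [x [[xpos xsum] ->]].
  have Hs1 : \big[Rplus/0]_(w <- Ps) x (p w) = 1 by rewrite Hbij.
  apply: Rnot_lt_le => Hlt.
  set N := INR n in Nge Hlt Ed *.
  pose a ps := \big[Rplus/0]_(w <- [seq u <- Ps | take 1 u == take 1 (winv ps)]) x (p w).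
  pose be := - ((12*N-3)/(9*N*N)).
  pose al := 1/(4*N) + (12*N-3)/(9*N*N)/4.
  have Hpt : forall ps, ps \in Ps -> al + be * a ps < x (p ps).
    move=> ps Hps.
    have -> : al + be * a ps = 1/(4*N) - (12*N-3)/(9*N*N) * (a ps - 1/4) by rewrite /al /be; field; lra.
    apply: key => //.
    + rewrite /a; apply: sum_pos => //.
      rewrite -size_eq0 size_filter.
      move: Hps; rewrite mem_Psi; case: ps => // c ps _.
      by rewrite /winv take1_winv head_count -lt0n expn_gt0.
    + have Hle : hfun k'.+1 p (winv ps) ps x <= Gk k'.+1 p x.
        rewrite /Gk. have R1 := rel_winv k'.+1 ps isT Hps.
        exact: (list_max_ge _ _ _ _ R1).
      rewrite /hfun Sset_winv // in Hle.
      exact: (Rle_lt_trans _ _ _ Hle Hlt).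
  have Hsum_a : \big[Rplus/0]_(ps <- Ps) a ps = N.
    rewrite /a; under eq_bigr => ps _ do rewrite big_filter.
    rewrite (exchange_big_dep xpredT) //=.
    rewrite -[RHS]Rmult_1_r -Hs1 -sum_scale.
    apply: eq_big_seq => w wP; rewrite sum_const; congr (_ * _).
    move: wP; rewrite mem_Psi; case: w => // b w _.
    rewrite take1_cons; congr INR; exact: tail_count.
  have Hne : Ps != [::] by rewrite -size_eq0 size_Psi muln_eq0 expn_eq0.
  have := sum_lt _ _ _ _ Hne Hpt.
  rewrite sum_affine Hsum_a size_Psi Ed Hs1.
  have -> : 4 * N * al + be * N = 1 by rewrite /al /be; field; lra.
  lra.
- move=> m' Hm'.
  pose x0 : 'I_(4 * n) -> R := fun _ => 1 / INR (4 * n).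
  have Hx0 : in_simplex x0.
    split; first by move=> i; rewrite /x0 Ed; apply Rdiv_lt_0_compat; lra.
    rewrite /x0 big_const_ord iter_Rplus; field; rewrite Ed; lra.
  apply: Rle_trans (Hm' _ (ex_intro _ x0 (conj Hx0 erefl))) _.
  rewrite /Gk; apply: list_max_le; first lra.
  move=> [g s] Hgs /=; rewrite /hfun.
  have -> : \big[Rplus/0]_(w <- Sset k'.+1 g s) x0 (p w) = INR (size (Sset k'.+1 g s)) * (1 / INR (4*n)).
    by rewrite /x0 sum_const count_predT.
  rewrite /x0 Ed; apply: upper => //.
  by apply/le_INR/leP; apply: Sset_size.
Qed.
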